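(* If $q>2$, the collinearity graph $\Gamma$ of $\mathcal X$ has diameter $2$.
   Context: Let $q=2^n$ and let $Q_0\cong Q(4,q)$ be the parabolic quadric generalized quadrangle in $\mathrm{PG}(4,q)$. An elliptic ovoid of $Q_0$ is a set $X=S\cap Q_0$ where $S$ is a $3$-dimensional projective subspace meeting $Q_0$ in an elliptic quadric $Q^-(3,q)$. Two distinct elliptic ovoids meet in one point (then they are called tangent) or in a conic. $\Gamma$ is the graph whose vertices are the elliptic ovoids of $Q_0$, two being adjacent iff they are distinct and tangent. *)

(* Defs.v *)
From HB Require Import structures.
From mathcomp Require Import all_boot all_order all_algebra all_fingroup all_field.
Set Implicit Arguments. Unset Strict Implicit. Unset Printing Implicit Defensive.
Import GRing.Theory.
Local Open Scope ring_scope.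

(* Vectors of F^5 are row vectors 'rV[F]_5; PG(4,q) = nonzero vectors up to
   nonzero scalars.  Coordinates x_0..x_4. *)
Definition cd {F : fieldType} {k : nat} (x : 'rV[F]_k.+1) (i : nat) : F :=
  x ord0 (inord i).

Definition proj_point (F : finFieldType) (v : 'rV[F]_5) : {set 'rV[F]_5} :=
  [set c *: v | c in [set c : F | c != 0]].

(* Standard quadratic form of the parabolic quadric Q(4,q), q even:
   Q(x) = x0^2 + x1 x2 + x3 x4. *)
Definition Qpar (F : finFieldType) (x : 'rV[F]_5) : F :=
  cd x 0 ^+ 2 + cd x 1 * cd x 2 + cd x 3 * cd x 4.

Definition in_hyp (F : finFieldType) (a x : 'rV[F]_5) : bool :=
  (x *m a^T) == 0.

(* The hyperplane S = ker a meets Q0 in an elliptic quadric Q^-(3,q):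
   there are coordinates on S (an injective linear map y |-> y *m M from
   F^4 onto S) in which Q restricted to S is the canonical elliptic form
   y0 y1 + y2^2 + c y2 y3 + d y3^2 with y2^2 + c y2 y3 + d y3^2 irreducible
   (anisotropic) over F. *)
Definition elliptic_section (F : finFieldType) (a : 'rV[F]_5) : Prop :=
  a != 0 /\
  exists (M : 'M[F]_(4, 5)) (c d : F),
    row_free M /\ M *m a^T = 0 /\
    (forall y2 y3 : F, y2 ^+ 2 + c * y2 * y3 + d * y3 ^+ 2 = 0 ->
        y2 = 0 /\ y3 = 0) /\
    (forall y : 'rV[F]_4,
        Qpar (y *m M) = cd y 0 * cd y 1 + cd y 2 ^+ 2 + c * cd y 2 * cd y 3
                        + d * cd y 3 ^+ 2).

Definition section (F : finFieldType) (a : 'rV[F]_5) : {set 'rV[F]_5} :=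
  [set x | [&& x != 0, in_hyp a x & Qpar x == 0]].

Definition elliptic_ovoid (F : finFieldType) (X : {set 'rV[F]_5}) : Prop :=
  exists a, elliptic_section a /\ X = section a.

Definition tangent (F : finFieldType) (X Y : {set 'rV[F]_5}) : Prop :=
  X <> Y /\ exists v, v != 0 /\ X :&: Y = proj_point v.

Fixpoint is_walk (T : Type) (V : T -> Prop) (E : T -> T -> Prop)
    (x : T) (p : list T) (y : T) : Prop :=
  match p with
  | nil => x = y
  | cons z p' => E x z /\ V z /\ is_walk V E z p' y
  end.

Definition dist_le (T : Type) (V : T -> Prop) (E : T -> T -> Prop)
    (x y : T) (k : nat) : Prop :=
  exists p : list T, (size p <= k)%N /\ is_walk V E x p y.

Definition has_diameter (T : Type) (V : T -> Prop) (E : T -> T -> Prop)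
    (d : nat) : Prop :=
  (forall x y, V x -> V y -> dist_le V E x y d) /\
  (exists x y, V x /\ V y /\ ~ dist_le V E x y d.-1).

(* Main.v *)
Require Import Defs.
From HB Require Import structures.
From mathcomp Require Import all_boot all_order all_algebra all_fingroup all_field.
From mathcomp Require Import ring.
Set Implicit Arguments. Unset Strict Implicit. Unset Printing Implicit Defensive.
Import GRing.Theory.
Local Open Scope ring_scope.

Section Basics.
Variable F : finFieldType.

Definition v4 (a b c d : F) : 'rV[F]_4 := \row_(i < 4) nth 0 [:: a; b; c; d] i.
Definition v5 (a b c d e : F) : 'rV[F]_5 := \row_(i < 5) nth 0 [:: a; b; c; d; e] i.

Lemma cdE k (x : 'rV[F]_k.+1) i : (i <= k)%N -> forall H : (i < k.+1)%N, cd x i = x ord0 (Ordinal H).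
Proof. by move=> Hi H; rewrite /cd; congr (x _ _); apply/val_inj; rewrite /= inordK //. Qed.

Lemma v4E a b c d : [/\ cd (v4 a b c d) 0 = a, cd (v4 a b c d) 1 = b, cd (v4 a b c d) 2 = c & cd (v4 a b c d) 3 = d].
Proof. by rewrite /cd !mxE !inordK. Qed.

Lemma v5E a b c d e : [/\ cd (v5 a b c d e) 0 = a, cd (v5 a b c d e) 1 = b, cd (v5 a b c d e) 2 = c, cd (v5 a b c d e) 3 = d & cd (v5 a b c d e) 4 = e].
Proof. by rewrite /cd !mxE !inordK. Qed.


Lemma v5c0 a b c d e : cd (v5 a b c d e) 0 = a. Proof. by case: (v5E a b c d e). Qed.
Lemma v5c1 a b c d e : cd (v5 a b c d e) 1 = b. Proof. by case: (v5E a b c d e). Qed.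
Lemma v5c2 a b c d e : cd (v5 a b c d e) 2 = c. Proof. by case: (v5E a b c d e). Qed.
Lemma v5c3 a b c d e : cd (v5 a b c d e) 3 = d. Proof. by case: (v5E a b c d e). Qed.
Lemma v5c4 a b c d e : cd (v5 a b c d e) 4 = e. Proof. by case: (v5E a b c d e). Qed.
Lemma v4c0 a b c d : cd (v4 a b c d) 0 = a. Proof. by case: (v4E a b c d). Qed.
Lemma v4c1 a b c d : cd (v4 a b c d) 1 = b. Proof. by case: (v4E a b c d). Qed.
Lemma v4c2 a b c d : cd (v4 a b c d) 2 = c. Proof. by case: (v4E a b c d). Qed.
Lemma v4c3 a b c d : cd (v4 a b c d) 3 = d. Proof. by case: (v4E a b c d). Qed.
Definition vcE := (v5c0, v5c1, v5c2, v5c3, v5c4, v4c0, v4c1, v4c2, v4c3).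
Lemma v4_eta (y : 'rV[F]_4) : y = v4 (cd y 0) (cd y 1) (cd y 2) (cd y 3).
Proof.
apply/rowP => i; rewrite mxE /cd (ord1 ord0).
case: i => -[|[|[|[|k]]]] Hi //=; congr (y _ _); apply/val_inj; rewrite /= inordK //.
Qed.

Lemma v5_eta (y : 'rV[F]_5) : y = v5 (cd y 0) (cd y 1) (cd y 2) (cd y 3) (cd y 4).
Proof.
apply/rowP => i; rewrite mxE /cd.
case: i => -[|[|[|[|[|k]]]]] Hi //=; congr (y _ _); apply/val_inj; rewrite /= inordK //.
Qed.

Lemma eq4 (y z : 'rV[F]_4) : cd y 0 = cd z 0 -> cd y 1 = cd z 1 -> cd y 2 = cd z 2 -> cd y 3 = cd z 3 -> y = z.
Proof. by move=> h0 h1 h2 h3; rewrite (v4_eta y) (v4_eta z) h0 h1 h2 h3. Qed.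
Lemma eq5 (y z : 'rV[F]_5) : cd y 0 = cd z 0 -> cd y 1 = cd z 1 -> cd y 2 = cd z 2 -> cd y 3 = cd z 3 -> cd y 4 = cd z 4 -> y = z.
Proof. by move=> h0 h1 h2 h3 h4; rewrite (v5_eta y) (v5_eta z) h0 h1 h2 h3 h4. Qed.

Lemma cdD k (x y : 'rV[F]_k.+1) i : cd (x + y) i = cd x i + cd y i.
Proof. by rewrite /cd mxE. Qed.
Lemma cdZ k (x : 'rV[F]_k.+1) c i : cd (c *: x) i = c * cd x i.
Proof. by rewrite /cd mxE. Qed.
Lemma cdN k (x : 'rV[F]_k.+1) i : cd (- x) i = - cd x i.
Proof. by rewrite /cd mxE. Qed.
Lemma cd0 k i : cd (0 : 'rV[F]_k.+1) i = 0.
Proof. by rewrite /cd mxE. Qed.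

Lemma v5_inj a b c d e a' b' c' d' e' : v5 a b c d e = v5 a' b' c' d' e' ->
  [/\ a = a', b = b', c = c', d = d' & e = e'].
Proof. by move=> H; have := v5E a b c d e; rewrite H; case: (v5E a' b' c' d' e') => -> -> -> -> -> [] -> -> -> -> ->. Qed.

Lemma sum5 (f : 'I_5 -> F) : \sum_i f i = f (inord 0) + f (inord 1) + f (inord 2) + f (inord 3) + f (inord 4).
Proof.
rewrite !big_ord_recl big_ord0 addr0 !addrA.
by repeat congr (_ + _); congr f; apply/val_inj; rewrite /= inordK.
Qed.

Lemma dotE (a x : 'rV[F]_5) : (x *m a^T) ord0 ord0 =
  cd a 0 * cd x 0 + cd a 1 * cd x 1 + cd a 2 * cd x 2 + cd a 3 * cd x 3 + cd a 4 * cd x 4.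
Proof.
rewrite mxE sum5 /cd !mxE.
by repeat congr (_ + _); rewrite mulrC.
Qed.
End Basics.

Section Char2.
Variable F : finFieldType.
Hypothesis two0 : (2 : F) = 0.
Implicit Types (x y z a b v : 'rV[F]_5) (c : F).

Definition Bf (x y : 'rV[F]_5) : F :=
  cd x 1 * cd y 2 + cd x 2 * cd y 1 + cd x 3 * cd y 4 + cd x 4 * cd y 3.
Definition dot (a x : 'rV[F]_5) : F :=
  cd a 0 * cd x 0 + cd a 1 * cd x 1 + cd a 2 * cd x 2 + cd a 3 * cd x 3 + cd a 4 * cd x 4.
Definition phi (v : 'rV[F]_5) : 'rV[F]_5 := v5 0 (cd v 2) (cd v 1) (cd v 4) (cd v 3).
Definition e0 : 'rV[F]_5 := v5 1 0 0 0 0.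

Lemma oppr2 (x : F) : - x = x.
Proof. by apply/esym/eqP; rewrite -addr_eq0 -mulr2n -mulr_natr two0 mulr0. Qed.

Lemma in_hypE a x : in_hyp a x = (dot a x == 0).
Proof.
rewrite /in_hyp /dot -dotE; apply/eqP/eqP => [->|h]; first by rewrite mxE.
by apply/matrixP => i j; rewrite (ord1 i) (ord1 j) h mxE.
Qed.

Lemma addxx (t : F) : t + t = 0.
Proof. by rewrite -mulr2n -mulr_natr two0 mulr0. Qed.
Lemma eq2_solve (a b t : F) : t = a + b -> a = b -> t = 0.
Proof. by move=> -> ->; rewrite addxx. Qed.

Ltac cds := rewrite /Qpar /Bf /dot /phi /e0 ?cdD ?cdZ ?cdN ?cd0;
  try (rewrite !vcE).

Lemma QD x y : Qpar (x + y) = Qpar x + Qpar y + Bf x y.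
Proof. rewrite /Qpar /Bf !cdD; ring: two0. Qed.
Lemma QZ c x : Qpar (c *: x) = c ^+ 2 * Qpar x.
Proof. rewrite /Qpar !cdZ; ring. Qed.
Lemma BfC x y : Bf x y = Bf y x.
Proof. rewrite /Bf; ring. Qed.
Lemma BfDr x y z : Bf x (y + z) = Bf x y + Bf x z.
Proof. rewrite /Bf !cdD; ring. Qed.
Lemma BfDl x y z : Bf (y + z) x = Bf y x + Bf z x.
Proof. rewrite /Bf !cdD; ring. Qed.
Lemma BfZr c x y : Bf x (c *: y) = c * Bf x y.
Proof. rewrite /Bf !cdZ; ring. Qed.
Lemma BfZl c x y : Bf (c *: y) x = c * Bf y x.
Proof. rewrite /Bf !cdZ; ring. Qed.
Lemma Bfxx x : Bf x x = 0.
Proof. rewrite /Bf; ring: two0. Qed.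
Lemma Bfe0 x : Bf e0 x = 0.
Proof. rewrite /Bf /e0; rewrite !vcE; ring. Qed.
Lemma Qe0 : Qpar e0 = 1.
Proof. rewrite /Qpar /e0; rewrite !vcE; ring. Qed.
Lemma dotDr a x y : dot a (x + y) = dot a x + dot a y.
Proof. rewrite /dot !cdD; ring. Qed.
Lemma dotDl a b x : dot (a + b) x = dot a x + dot b x.
Proof. rewrite /dot !cdD; ring. Qed.
Lemma dotZr a c x : dot a (c *: x) = c * dot a x.
Proof. rewrite /dot !cdZ; ring. Qed.
Lemma dotZl a c x : dot (c *: a) x = c * dot a x.
Proof. rewrite /dot !cdZ; ring. Qed.
Lemma dot_phi v x : dot (phi v) x = Bf v x.
Proof. rewrite /dot /phi /Bf; rewrite !vcE; ring. Qed.
Lemma dot_e0 a : dot a e0 = cd a 0.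
Proof. rewrite /dot /e0; rewrite !vcE; ring. Qed.
Lemma dot_split a x : dot a x = cd a 0 * cd x 0 + Bf (phi a) x.
Proof. rewrite /dot /phi /Bf; rewrite !vcE; ring. Qed.
Lemma phi_phi a : cd a 0 = 0 -> phi (phi a) = a.
Proof.
move=> h; rewrite {2}(v5_eta a) /phi; rewrite !vcE.
by rewrite h.
Qed.
Lemma phiD a b : phi (a + b) = phi a + phi b.
Proof. rewrite (v5_eta (phi a + phi b)) /phi !cdD; by rewrite !vcE addr0. Qed.
Lemma phiZ c a : phi (c *: a) = c *: phi a.
Proof. rewrite (v5_eta (c *: phi a)) /phi !cdZ; by rewrite !vcE; rewrite mulr0. Qed.
Lemma cd0_phi a : cd (phi a) 0 = 0.
Proof. by rewrite /phi; rewrite !vcE. Qed.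
Lemma Bf_phi_l a x : Bf (phi a) x = dot a x - cd a 0 * cd x 0.
Proof. rewrite dot_split; ring. Qed.

End Char2.

Lemma eq_solve (F : ringType) (a b t : F) : t = a - b -> a = b -> t = 0.
Proof. by move=> -> ->; rewrite subrr. Qed.

Section Ell.
Variable F : finFieldType.
Hypothesis two0 : (2 : F) = 0.
Implicit Types (x : 'rV[F]_5) (y z w : 'rV[F]_4).

Definition gf (c d : F) (y : 'rV[F]_4) : F :=
  cd y 0 * cd y 1 + cd y 2 ^+ 2 + c * cd y 2 * cd y 3 + d * cd y 3 ^+ 2.
Definition aniso (c d : F) := forall y2 y3 : F, y2 ^+ 2 + c * y2 * y3 + d * y3 ^+ 2 = 0 ->
        y2 = 0 /\ y3 = 0.

Lemma sqr_inj : injective (fun r : F => r ^+ 2).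
Proof.
move=> r s /= h; apply/eqP; rewrite -subr_eq0 (oppr2 two0); apply/eqP.
have : (r + s) ^+ 2 = 0 by apply: (eq2_solve two0 _ h); ring: two0.
by move/eqP; rewrite expf_eq0 /= => /eqP.
Qed.

Lemma sqrt_ex (d : F) : exists r, r ^+ 2 = d.
Proof.
have /codomP [r ->] := injF_onto sqr_inj d.
by exists r.
Qed.

Lemma c_neq0 c d : aniso c d -> c != 0.
Proof.
move=> an; apply/eqP => c0; have [r hr] := sqrt_ex d.
have h : r ^+ 2 + c * r * 1 + d * 1 ^+ 2 = 0 by rewrite c0 -hr; ring: two0.
by have [_ /eqP] := an r 1 h; rewrite oner_eq0.
Qed.

Lemma gfD c d y w : gf c d (y + w) = gf c d y + gf c d w +
  (cd y 0 * cd w 1 + cd y 1 * cd w 0 + c * (cd y 2 * cd w 3 + cd y 3 * cd w 2)).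
Proof. rewrite /gf !cdD; ring: two0. Qed.

Lemma ND c d y : aniso c d -> (forall w, gf c d (y + w) = gf c d y + gf c d w) -> y = 0.
Proof.
move=> an H; have cn := c_neq0 an.
have h0 := H (v4 1 0 0 0); have h1 := H (v4 0 1 0 0).
have h2 := H (v4 0 0 1 0); have h3 := H (v4 0 0 0 1).
rewrite gfD [gf _ _ (v4 _ _ _ _)]/gf !vcE in h0.
rewrite gfD [gf _ _ (v4 _ _ _ _)]/gf !vcE in h1.
rewrite gfD [gf _ _ (v4 _ _ _ _)]/gf !vcE in h2.
rewrite gfD [gf _ _ (v4 _ _ _ _)]/gf !vcE in h3.
have y1 : cd y 1 = 0 by apply: (eq2_solve two0 _ h0); ring: two0.
have y0 : cd y 0 = 0 by apply: (eq2_solve two0 _ h1); ring: two0.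
have y3 : c * cd y 3 = 0 by apply: (eq2_solve two0 _ h2); ring: two0.
have y2 : c * cd y 2 = 0 by apply: (eq2_solve two0 _ h3); ring: two0.
move/eqP: y3; rewrite mulf_eq0 (negbTE cn) /= => /eqP y3.
move/eqP: y2; rewrite mulf_eq0 (negbTE cn) /= => /eqP y2.
by apply: eq4; rewrite ?cd0.
Qed.
End Ell.

Section Ell2.
Variable F : finFieldType.
Hypothesis two0 : (2 : F) = 0.
Implicit Types (x : 'rV[F]_5) (y z w : 'rV[F]_4).

Lemma TSy c d y z : aniso c d -> gf c d z = 0 -> z != 0 ->
  (forall al, gf c d (y + al *: z) = 0) -> exists k, y = k *: z.
Proof.
move=> an gz zn H.
have gfE u : gf c d u = cd u 0 * cd u 1 + (cd u 2 ^+ 2 + c * cd u 2 * cd u 3 + d * cd u 3 ^+ 2).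
  by rewrite /gf; ring.
have [z0|z0] := eqVneq (cd z 0) 0.
  have [z2 z3] : cd z 2 = 0 /\ cd z 3 = 0 by apply: an; move: gz; rewrite gfE z0 mul0r add0r.
  have z1 : cd z 1 != 0.
    apply: contra zn => /eqP z1; apply/eqP; apply: eq4; by rewrite ?cd0.
  have gy : gf c d y = 0 by have := H 0; rewrite scale0r addr0.
  have Hyz : gf c d (y + z) = 0 by have := H 1; rewrite scale1r.
  have := gfD two0 c d y z; rewrite Hyz gy gz z0 z2 z3 => h.
  have y0 : cd y 0 * cd z 1 = 0 by apply: (eq2_solve two0 _ h); ring: two0.
  move/eqP: y0; rewrite mulf_eq0 (negbTE z1) orbF => /eqP y0.
  have [y2 y3] : cd y 2 = 0 /\ cd y 3 = 0 by apply: an; move: gy; rewrite gfE y0 mul0r add0r.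
  exists (cd y 1 / cd z 1); apply: eq4; rewrite !cdZ ?y0 ?y2 ?y3 ?z0 ?z2 ?z3 ?mulr0 //.
  by rewrite divfK.
set al := - (cd y 0 / cd z 0).
have u0 : cd (y + al *: z) 0 = 0 by rewrite cdD cdZ /al mulNr divfK // subrr.
have [u2 u3] : cd (y + al *: z) 2 = 0 /\ cd (y + al *: z) 3 = 0.
  by apply: an; have := H al; rewrite gfE u0 mul0r add0r.
have := gfD two0 c d (y + al *: z) z.
rewrite -addrA -{2}(scale1r z) -scalerDl H (H al) gz u0 u2 u3 => h.
have u1 : cd (y + al *: z) 1 * cd z 0 = 0 by apply: (eq2_solve two0 _ h); ring: two0.
move/eqP: u1; rewrite mulf_eq0 (negbTE z0) orbF => /eqP u1.
have key i : cd (y + al *: z) i = 0 -> cd y i = (- al) * cd z i.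
  by rewrite cdD cdZ => h'; rewrite mulNr; apply: (addIr (al * cd z i)); rewrite h' addNr.
by exists (- al); apply: eq4; rewrite cdZ; apply: key.
Qed.
End Ell2.

Section EllVec.
Variable F : finFieldType.
Hypothesis two0 : (2 : F) = 0.
Implicit Types (x W a b : 'rV[F]_5) (y z w : 'rV[F]_4) (M : 'M[F]_(4,5)).

Definition ell_data a M c d := [/\ a != 0, row_free M, M *m a^T = 0, aniso c d &
  forall y, Qpar (y *m M) = gf c d y].

Lemma ell_dataP a : elliptic_section a <-> exists M c d, ell_data a M c d.
Proof.
split=> [[an [M [c [d [h1 [h2 [h3 h4]]]]]]]|[M [c [d [h1 h2 h3 h4 h5]]]]].
  by exists M, c, d; split.
by split=> //; exists M, c, d.
Qed.

Lemma Q0 : Qpar (0 : 'rV[F]_5) = 0.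
Proof. by rewrite /Qpar !cd0; ring. Qed.

Lemma inS a M y : M *m a^T = 0 -> in_hyp a (y *m M).
Proof. by move=> h; rewrite /in_hyp -mulmxA h mulmx0. Qed.

Lemma hypM a M x : a != 0 -> row_free M -> M *m a^T = 0 -> in_hyp a x ->
  exists y, x = y *m M.
Proof.
move=> an rf hM /eqP hx.
have sM : (M <= kermx a^T)%MS by apply/sub_kermxP.
have rk : \rank (kermx a^T) = 4%N.
  by rewrite mxrank_ker mxrank_tr rank_rV an.
have rM : \rank M = 4%N by move: rf; rewrite /row_free => /eqP.
have eqM : (M == kermx a^T)%MS by rewrite -(mxrank_leqif_eq sM).2 rk rM.
have /andP [_ sK] := eqM.
have sx : (x <= kermx a^T)%MS by apply/sub_kermxP.
by apply/submxP; apply: submx_trans sx sK.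
Qed.

Lemma rowfree_form M c d : aniso c d -> (forall y, Qpar (y *m M) = gf c d y) -> row_free M.
Proof.
move=> an hf; apply: inj_row_free => v hv.
apply: (ND two0 an) => w.
by rewrite -!hf mulmxDl hv add0r Q0 add0r.
Qed.

Lemma a0_neq0 a M c d : ell_data a M c d -> cd a 0 != 0.
Proof.
case=> an rf hM ani hf; apply/eqP => a0.
have : in_hyp a (e0 F) by rewrite in_hypE dot_e0 a0.
case/(hypM an rf hM) => z hz.
have : z = 0.
  apply: (ND two0 ani) => w.
  rewrite -!hf mulmxDl -hz (QD two0) Qe0 Bfe0 addr0; by [].
move=> z0; move: hz; rewrite z0 mul0mx => /(congr1 (fun v => cd v 0)).
rewrite cd0 /e0 !vcE => /eqP; by rewrite oner_eq0.
Qed.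

Lemma TS a M c d x W : ell_data a M c d -> in_hyp a x -> in_hyp a W ->
  Qpar x = 0 -> Qpar W = 0 -> Bf x W = 0 -> W != 0 -> exists k, x = k *: W.
Proof.
case=> an rf hM ani hf hx hW Qx QW Bxw Wn.
have [y hy] := hypM an rf hM hx; have [z hz] := hypM an rf hM hW.
have zn : z != 0 by apply: contra Wn => /eqP z0; rewrite hz z0 mul0mx.
have [k hk] : exists k, y = k *: z.
  apply: (TSy two0 ani) => // [|al]; first by rewrite -hf -hz.
  rewrite -hf mulmxDl -scalemxAl -hz -hy (QD two0) QZ BfZr Qx QW Bxw; ring.
by exists k; rewrite hy hk hz scalemxAl.
Qed.
End EllVec.

Section L1.
Variable F : finFieldType.
Hypothesis two0 : (2 : F) = 0.

Definition inT (t : F) := exists r, t = r ^+ 2 + r.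

Lemma nu_ex (t : F) : inT t -> exists nu, nu ^+ 2 * t + nu + 1 = 0.
Proof.
case=> r hr; have [t0|t0] := eqVneq t 0.
  by exists 1; rewrite t0 mulr0 add0r; apply: (addxx two0).
exists (r / t).
have e : (r / t) ^+ 2 * t + r / t + 1 = (r ^+ 2 + r) / t + 1 by field.
by rewrite e -hr divff // addxx.
Qed.

Lemma L1 (a : 'rV[F]_5) M c d : ell_data a M c d -> cd a 0 = 1 -> ~ inT (Qpar (phi a)).
Proof.
move=> ed a0 hT.
have dE : Qpar (phi a) = cd a 2 * cd a 1 + cd a 4 * cd a 3 by rewrite /Qpar /phi !vcE; ring.
rewrite dE in hT; have [nu hnu] := nu_ex hT.
set a1 := cd a 1 in hnu *; set a2 := cd a 2 in hnu *; set a3 := cd a 3 in hnu *; set a4 := cd a 4 in hnu *.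
pose U := v5 a1 (1 + nu * a1 * a2) (nu * a1 * a1) (nu * a1 * a4) (nu * a1 * a3).
pose V := v5 a3 (nu * a3 * a2) (nu * a3 * a1) (1 + nu * a3 * a4) (nu * a3 * a3).
have hU : in_hyp a U.
  rewrite in_hypE /dot /U !vcE a0 -/a1 -/a2 -/a3 -/a4; apply/eqP; ring: two0.
have hV : in_hyp a V.
  rewrite in_hypE /dot /V !vcE a0 -/a1 -/a2 -/a3 -/a4; apply/eqP; ring: two0.
have QU : Qpar U = 0.
  have -> : Qpar U = a1 ^+ 2 * (nu ^+ 2 * (a2 * a1 + a4 * a3) + nu + 1) by rewrite /Qpar /U !vcE; ring.
  by rewrite hnu mulr0.
have QV : Qpar V = 0.
  have -> : Qpar V = a3 ^+ 2 * (nu ^+ 2 * (a2 * a1 + a4 * a3) + nu + 1) by rewrite /Qpar /V !vcE; ring.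
  by rewrite hnu mulr0.
have BUV : Bf U V = 0 by rewrite /Bf /U /V !vcE; ring: two0.
have Vn : V != 0.
  have [a30|a30] := eqVneq a3 0.
    apply/eqP => /(congr1 (fun v => cd v 3)); rewrite cd0 /V !vcE a30 mulr0 mul0r addr0.
    by move/eqP; rewrite oner_eq0.
  by apply/eqP => /(congr1 (fun v => cd v 0)); rewrite cd0 /V !vcE; apply/eqP.
have [k hk] := TS two0 ed hU hV QU QV BUV Vn.
have h0 := congr1 (fun v => cd v 0) hk; have h1 := congr1 (fun v => cd v 1) hk.
rewrite /= !cdZ /U /V !vcE in h0 h1.
have : (1 : F) = nu * a2 * (k * a3 - a1).
  have e : (1 : F) = (1 + nu * a1 * a2) - nu * a1 * a2 by ring.
  by rewrite {1}e h1; ring.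
by rewrite h0 subrr mulr0 => /eqP; rewrite oner_eq0.
Qed.
End L1.

Section Tset.
Variable F : finFieldType.
Hypothesis two0 : (2 : F) = 0.
Implicit Types (x y t r s : F).

Definition fT (r : F) := r ^+ 2 + r.
Definition Tset := [set fT r | r in [set: F]].

Lemma inTP t : reflect (inT t) (t \in Tset).
Proof.
apply: (iffP imsetP) => [[r _ ->]|[r ->]]; first by exists r.
by exists r.
Qed.

Lemma inT_add x y : inT x -> inT y -> inT (x + y).
Proof. by case=> r -> [s ->]; exists (r + s); ring: two0. Qed.

Lemma inT_f r : inT (r ^+ 2 + r). Proof. by exists r. Qed.

Lemma pp1 (r : F) : r + 1 + 1 = r.
Proof. by rewrite -addrA (addxx two0) addr0. Qed.

Lemma fT_eq r s : fT r = fT s -> s = r \/ s = r + 1.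
Proof.
move=> h.
have : (r + s) * (r + s + 1) = 0 by apply: (eq2_solve two0 _ h); rewrite /fT; ring: two0.
move/eqP; rewrite mulf_eq0 => /orP [] /eqP e.
  left; apply/eqP; rewrite -subr_eq0 (oppr2 two0); apply/eqP.
  by rewrite addrC.
right; apply/eqP; rewrite -subr_eq0 (oppr2 two0); apply/eqP.
by rewrite -e; ring.
Qed.

Lemma fT1 r : fT (r + 1) = fT r.
Proof.
have h : fT (r + 1) = fT r + 2 * (r + 1) by rewrite /fT; ring.
by rewrite h two0 mul0r addr0.
Qed.

Definition rep (r : F) := (enum_rank r < enum_rank (r + 1)%R)%N.

Lemma card_Tset : (#|F| <= 2 * #|Tset|)%N.
Proof.
pose A := [set r | rep r].
have injA : {in A &, injective fT}.
  move=> r s; rewrite !inE /rep => hr hs /fT_eq [//|e].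
  by move: hs; rewrite e pp1 => hs; move: (ltn_trans hr hs); rewrite ltnn.
have cA : #|A| = #|fT @: A| by apply/esym/eqP/imset_injP.
have sA : fT @: A \subset Tset by apply: imsetS; apply: subsetT.
have cAc : (#|~: A| <= #|A|)%N.
  have : ~: A \subset (fun r => r + 1) @: A.
    apply/subsetP => r; rewrite !inE /rep -leqNgt leq_eqVlt => /orP [/eqP e|h].
      by move: e => /val_inj/enum_rank_inj; rewrite -{2}(addr0 r) => /addrI /eqP; rewrite oner_eq0.
    apply/imsetP; exists (r + 1); last by rewrite pp1.
    by rewrite inE /rep pp1.
  move/subset_leq_card/leq_trans; apply; exact: leq_imset_card.
rewrite -(cardsC A) mul2n -addnn; apply: leq_add; first by rewrite cA subset_leq_card.
by apply: leq_trans cAc _; rewrite cA subset_leq_card.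
Qed.

Lemma index2 x y : ~ inT x -> ~ inT y -> inT (x + y).
Proof.
move=> hx hy.
have sub : (fun t => t + x) @: Tset \subset ~: Tset.
  apply/subsetP => u /imsetP [t /inTP ht ->]; rewrite inE; apply/inTP => h.
  apply: hx; have := inT_add h ht; congr inT; ring: two0.
have cI : #|(fun t => t + x) @: Tset| = #|Tset| by apply: card_imset; apply: addIr.
have cC : (#|~: Tset| <= #|Tset|)%N.
  have := card_Tset; rewrite -(cardsC Tset) mul2n -addnn leq_add2l; by [].
have : (fun t => t + x) @: Tset == ~: Tset by rewrite eqEcard sub cI.
move/eqP => e.
have : y \in ~: Tset by rewrite inE; apply/negP => /inTP.
rewrite -e => /imsetP [t /inTP ht ->].
by rewrite addrCA (addxx two0) addr0.
Qed.

Lemma notT_ex : exists d : F, ~ inT d.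
Proof.
have : ~~ (#|fT @: [set: F]| == #|[set: F]|).
  apply/imset_injP => inj.
  have : (0 : F) = 1 by apply: inj; rewrite ?inE // /fT; ring: two0.
  by move/eqP; rewrite eq_sym oner_eq0.
move=> hneq.
have H : [set: F] != Tset.
  by apply: contra hneq => /eqP e; rewrite -[fT @: _]/Tset -e.
have ns : ~~ ([set: F] \subset Tset) by apply: contra H => s; rewrite eqEsubset s subsetT.
case/subsetPn: ns => d _ hd.
by exists d => /inTP h; rewrite h in hd.
Qed.

Lemma big_ex : (2 < #|F|)%N -> exists t : F, t != 0 /\ t != 1.
Proof.
move=> h; have : ~~ ([set: F] \subset [set 0; 1]).
  apply: contraL h => /subset_leq_card; rewrite cardsT cards2 -leqNgt => h2.
  by apply: leq_trans h2 _; case: (_ != _).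
case/subsetPn => t _; rewrite !inE negb_or => /andP [h0 h1].
by exists t.
Qed.
End Tset.

Section Geo.
Variable F : finFieldType.
Hypothesis two0 : (2 : F) = 0.
Implicit Types (x W a b u v R : 'rV[F]_5) (y z w : 'rV[F]_4) (M : 'M[F]_(4,5)).

Lemma outer x u v : (x *m u^T) *m v = dot u x *: v.
Proof.
rewrite [x *m u^T]mx11_scalar mul_scalar_mx; congr (_ *: _).
by rewrite /dot -dotE.
Qed.

Lemma normalize a M c d : ell_data a M c d ->
  let a' := (cd a 0)^-1 *: a in
  [/\ ell_data a' M c d, cd a' 0 = 1 & section a' = section a].
Proof.
move=> ed; have a0 := a0_neq0 two0 ed; case: ed => an rf hM ani hf a'.
have hx x : in_hyp a' x = in_hyp a x.
  by rewrite !in_hypE /a' dotZl mulf_eq0 invr_eq0 (negbTE a0).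
split.
- split=> //; first by rewrite /a' scaler_eq0 invr_eq0 (negbTE a0) (negbTE an).
  by rewrite /a' linearZ /= -scalemxAr hM scaler0.
- by rewrite /a' cdZ mulVf.
- by apply/setP => x; rewrite !inE hx.
Qed.

Lemma dot_b a b x : cd a 0 = 1 -> cd b 0 = 1 -> dot b x = dot a x + Bf (phi (a + b)) x.
Proof.
move=> a0 b0; rewrite !dot_split a0 b0 phiD BfDl.
have h : 1 * cd x 0 + Bf (phi a) x + (Bf (phi a) x + Bf (phi b) x) = cd x 0 + Bf (phi b) x + 2 * Bf (phi a) x by ring.
by rewrite h two0 mul0r addr0 mul1r.
Qed.

Definition kappa a b := Qpar (phi (a + b)) + (dot b (phi (a + b))) ^+ 2.

Lemma Tr a b M c d : ell_data a M c d -> cd a 0 = 1 -> cd b 0 = 1 -> inT (kappa a b) ->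
  exists M', ell_data b M' c d.
Proof.
move=> ed a0 b0 hk; have [nu hnu] := nu_ex two0 hk.
case: ed => an rf hM ani hf.
rewrite /kappa in hnu.
set W := phi (a + b) in hnu *; set s := dot b W in hnu *.
set v := nu *: W + (1 + nu * s) *: e0 F.
pose M' := M + (M *m (phi W)^T) *m v.
have yM y : y *m M' = y *m M + Bf W (y *m M) *: v.
  by rewrite mulmxDr !mulmxA outer dot_phi.
have Qv : Qpar v = nu ^+ 2 * Qpar W + (1 + nu * s) ^+ 2.
  by rewrite /v (QD two0) !QZ Qe0 BfZr BfZl (BfC W) Bfe0 !mulr0 addr0 mulr1.
have Bxv x : Bf x v = nu * Bf W x.
  by rewrite /v BfDr !BfZr (BfC x (e0 F)) Bfe0 mulr0 addr0 BfC.
have Qx x : Qpar (x + Bf W x *: v) = Qpar x.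
  rewrite (QD two0) QZ BfZr Qv Bxv.
  have e : Qpar x + Bf W x ^+ 2 * (nu ^+ 2 * Qpar W + (1 + nu * s) ^+ 2) + Bf W x * (nu * Bf W x)
    = Qpar x + Bf W x ^+ 2 * (nu ^+ 2 * (Qpar W + s ^+ 2) + nu + 1) + 2 * (Bf W x ^+ 2 * nu * s) by ring.
  by rewrite e hnu two0 !mul0r mulr0 !addr0.
have inb x : in_hyp a x -> in_hyp b (x + Bf W x *: v).
  rewrite !in_hypE => /eqP ha; apply/eqP.
  rewrite dotDr dotZr (dot_b x a0 b0) -/W ha add0r /v dotDr !dotZr -/s dot_e0 b0.
  have e : Bf W x + Bf W x * (nu * s + (1 + nu * s) * 1) = 2 * (Bf W x * (1 + nu * s)) by ring.
  by rewrite e two0 mul0r.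
exists M'; split=> //.
- by apply/eqP => h; move: b0; rewrite h cd0 => /eqP; rewrite eq_sym oner_eq0.
- by apply: (rowfree_form two0 ani) => y; rewrite yM Qx hf.
- apply/row_matrixP => i; rewrite row_mul row0 rowE; apply/eqP.
  by rewrite -/(in_hyp b _) yM; apply: inb; apply: inS.
- by move=> y; rewrite yM Qx hf.
Qed.

Lemma in_section a x : (x \in section a) = [&& x != 0, in_hyp a x & Qpar x == 0].
Proof. by rewrite inE. Qed.

Lemma in_proj R x : reflect (exists2 k, k != 0 & x = k *: R) (x \in proj_point R).
Proof.
apply: (iffP imsetP) => [[k]|[k kn ->]]; first by rewrite inE => kn ->; exists k.
by exists k; rewrite ?inE.
Qed.

Lemma not_point a M c d R : ell_data a M c d -> section a <> proj_point R.
Proof.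
case=> an rf hM ani hf e.
have mem y : y != 0 -> gf c d y = 0 -> y *m M \in proj_point R.
  move=> yn gy; rewrite -e in_section mulmx_free_eq0 // yn inS //= hf gy eqxx.
  by [].
have [k0 k0n h0] : exists2 k, k != 0 & v4 1 0 0 0 *m M = k *: R.
  apply/in_proj/mem; last by rewrite /gf !vcE; ring.
  by apply/eqP => /(congr1 (fun t => cd t 0)); rewrite cd0 !vcE => /eqP; rewrite oner_eq0.
have [k1 k1n h1] : exists2 k, k != 0 & v4 0 1 0 0 *m M = k *: R.
  apply/in_proj/mem; last by rewrite /gf !vcE; ring.
  by apply/eqP => /(congr1 (fun t => cd t 1)); rewrite cd0 !vcE => /eqP; rewrite oner_eq0.
have : (v4 0 1 0 0 - (k1 / k0) *: v4 1 0 0 0) *m M = 0.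
  by rewrite mulmxBl -scalemxAl h0 h1 scalerA divfK // subrr.
move/eqP; rewrite mulmx_free_eq0 // => /eqP /(congr1 (fun t => cd t 1)).
rewrite cdD cdN cdZ cd0 !vcE mulr0 subr0 => /eqP; by rewrite oner_eq0.
Qed.

Lemma TC a M c d b R : ell_data a M c d -> R != 0 -> in_hyp a R -> in_hyp b R -> Qpar R = 0 ->
  (forall x, in_hyp a x -> in_hyp b x -> Bf R x = 0) ->
  tangent (section a) (section b) /\ tangent (section b) (section a).
Proof.
move=> ed Rn haR hbR QR perp.
have I : section a :&: section b = proj_point R.
  apply/setP => x; rewrite inE !in_section; apply/idP/in_proj.
    case/andP => /and3P [xn hax /eqP Qx] /and3P [_ hbx _].
    have [k hk] := TS two0 ed hax haR Qx QR (etrans (BfC _ _) (perp x hax hbx)) Rn.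
    exists k => //; apply: contra xn => /eqP k0; by rewrite hk k0 scale0r.
  case=> k kn ->; move: haR hbR; rewrite !in_hypE !dotZr => /eqP -> /eqP ->.
  by rewrite mulr0 eqxx QZ QR mulr0 eqxx scaler_eq0 (negbTE kn) (negbTE Rn).
have ne : section a <> section b.
  by move=> e; apply: (not_point ed (R := R)); rewrite -I e setIid.
split; split => //; first by exists R.
  by move=> e; apply: ne.
by exists R; rewrite setIC.
Qed.
End Geo.

Section Main.
Variable F : finFieldType.
Hypothesis two0 : (2 : F) = 0.
Implicit Types (x W a b u v R P : 'rV[F]_5) (y z w : 'rV[F]_4) (M : 'M[F]_(4,5)).

Lemma addvv a : a + a = 0.
Proof. by apply: eq5; rewrite !cdD cd0 (addxx two0). Qed.

Lemma Bf_pp v x : Bf (phi (phi v)) x = Bf v x.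
Proof. by rewrite /Bf /phi !vcE. Qed.

Lemma QPP v : Qpar (phi (phi v)) = Qpar v + cd v 0 ^+ 2.
Proof. rewrite /Qpar /phi !vcE; ring: two0. Qed.

Lemma Bf_nondeg W : W != 0 -> cd W 0 = 0 -> exists x, Bf W x != 0.
Proof.
move=> Wn W0; case: (boolP [exists x, Bf W x != 0]) => [/existsP [x hx]|]; first by exists x.
rewrite negb_exists => /forallP h; exfalso; move/negP: Wn; apply.
have t k : Bf W k = 0 by move: (h k); rewrite negbK => /eqP.
have := t (v5 0 1 0 0 0); have := t (v5 0 0 1 0 0); have := t (v5 0 0 0 1 0); have := t (v5 0 0 0 0 1).
rewrite /Bf !vcE !mulr0 !mulr1 !add0r !addr0 => h1 h2 h3 h4.
by apply/eqP; apply: eq5; rewrite ?cd0.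
Qed.

Lemma iso_ex a M c d W : ell_data a M c d -> (exists2 x, in_hyp a x & Bf W x != 0) ->
  exists2 y, gf c d y = 0 & Bf W (y *m M) != 0.
Proof.
case=> an rf hM ani hf [x hx hW].
have [y hy] := hypM an rf hM hx.
pose p0 : 'rV[F]_4 := v4 1 0 0 0; pose p1 : 'rV[F]_4 := v4 0 1 0 0; pose p2 : 'rV[F]_4 := v4 1 1 1 0; pose p3 := v4 1 d 0 1.
have g0 : gf c d p0 = 0 by rewrite /gf !vcE; ring.
have g1 : gf c d p1 = 0 by rewrite /gf !vcE; ring.
have g2 : gf c d p2 = 0 by rewrite /gf !vcE; ring: two0.
have g3 : gf c d p3 = 0 by rewrite /gf !vcE; ring: two0.
have [h0|h0] := eqVneq (Bf W (p0 *m M)) 0; last by exists p0.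
have [h1|h1] := eqVneq (Bf W (p1 *m M)) 0; last by exists p1.
have [h2|h2] := eqVneq (Bf W (p2 *m M)) 0; last by exists p2.
have [h3|h3] := eqVneq (Bf W (p3 *m M)) 0; last by exists p3.
exfalso; move/negP: hW; apply; apply/eqP.
have ey : y = (cd y 0 - cd y 2 - cd y 3) *: p0 + (cd y 1 - cd y 2 - d * cd y 3) *: p1
   + cd y 2 *: p2 + cd y 3 *: p3.
  by apply: eq4; rewrite !cdD !cdZ !vcE; ring.
by rewrite hy ey !mulmxDl -!scalemxAl !BfDr !BfZr h0 h1 h2 h3 !mulr0 !addr0.
Qed.

Lemma common a1 M1 c1 d1 a2 M2 c2 d2 : ell_data a1 M1 c1 d1 -> ell_data a2 M2 c2 d2 ->
  cd a1 0 = 1 -> cd a2 0 = 1 -> a1 != a2 ->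
  exists a3, [/\ elliptic_section a3, tangent (section a1) (section a3)
                & tangent (section a3) (section a2)].
Proof.
move=> ed1 ed2 a10 a20 a12.
set W := phi (a1 + a2).
have W0 : cd W 0 = 0 by rewrite cd0_phi.
have Wn : W != 0.
  apply: contra a12 => /eqP h; apply/eqP.
  have D0 : cd (a1 + a2) 0 = 0 by rewrite cdD a10 a20 (addxx two0).
  have : a1 + a2 = 0 by rewrite -(phi_phi D0) -/W h /phi !cd0; apply: eq5; rewrite !vcE ?cd0.
  by move=> hh; have := congr1 (fun t => a1 + t) hh; rewrite addrA addvv add0r addr0.
have nT1 := L1 two0 ed1 a10; have nT2 := L1 two0 ed2 a20.
have hk : inT (kappa a1 a2).
  have e : kappa a1 a2 = (Qpar (phi a1) + Qpar (phi a2)) +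
      (Bf (phi a1) (phi a2) ^+ 2 + Bf (phi a1) (phi a2)).
    rewrite /kappa (dot_split a2) -/W W0 mulr0 add0r /W phiD (QD two0) BfDr (Bfxx two0) addr0.
    rewrite (BfC (phi a2)); ring.
  by rewrite e; apply: (inT_add two0 (index2 two0 nT1 nT2) (inT_f _)).
have [r hr] := hk.
pose sg := if r == 0 then r + 1 else r.
have sgn : sg != 0 by rewrite /sg; case: ifP => [/eqP ->|/negbT //]; rewrite add0r oner_eq0.
have hsg : sg ^+ 2 + sg = kappa a1 a2.
  rewrite hr /sg; case: ifP => // _; exact: (fT1 two0 r).
have [an1 rf1 hM1 ani1 hf1] := ed1.
have ex1 : exists2 x, in_hyp a1 x & Bf W x != 0.
  have [x' hx'] := Bf_nondeg Wn W0.
  exists (x' + dot a1 x' *: e0 F).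
    rewrite in_hypE dotDr dotZr dot_e0 a10 mulr1 (addxx two0) //.
  by rewrite BfDr BfZr (BfC W (e0 F)) Bfe0 mulr0 addr0.
have [y gy hB] := iso_ex ed1 ex1.
set P0 := y *m M1 in hB.
set P := (sg / Bf W P0) *: P0.
have hP1 : in_hyp a1 P.
  by move: (inS y hM1); rewrite !in_hypE dotZr => /eqP ->; rewrite mulr0.
have QP : Qpar P = 0 by rewrite QZ /P0 hf1 gy mulr0.
have BWP : Bf W P = sg by rewrite BfZr divfK.
have Pn : P != 0 by apply: contra sgn => /eqP P0'; rewrite -BWP P0' /Bf !cd0; apply/eqP; ring.
set a3 := a1 + phi P.
have a30 : cd a3 0 = 1 by rewrite cdD cd0_phi a10 addr0.
have k3 : kappa a1 a3 = 0.
  have e1 : a1 + a3 = phi P by rewrite /a3 addrA addvv add0r.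
  have dP : Bf (phi a1) P = cd P 0.
    move: hP1; rewrite in_hypE dot_split a10 mul1r => /eqP h.
    by apply/eqP; rewrite -subr_eq0 (oppr2 two0) addrC h.
  rewrite /kappa e1 QPP /a3 dotDl dot_phi (BfC P) Bf_pp (Bfxx two0) addr0.
  rewrite dot_split cd0_phi mulr0 add0r (BfC (phi a1)) Bf_pp (BfC P) dP QP add0r.
  exact: addxx.
have [M3 ed3] := Tr two0 ed1 a10 a30 (ex_intro _ 0 (etrans k3 (esym (etrans (addr0 _) (expr0n _ 2))))).
exists a3; split.
- by apply/ell_dataP; exists M3, c1, d1.
- have hP3 : in_hyp a3 P.
    move: hP1; rewrite !in_hypE /a3 dotDl dot_phi (Bfxx two0) addr0; by [].
  apply: (proj1 (TC two0 ed1 Pn hP1 hP3 QP _)) => x h1 h3.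
  move: h1 h3; rewrite !in_hypE /a3 dotDl dot_phi => /eqP ->; rewrite add0r => /eqP; by [].
set rho := dot a2 (W + P).
set R := W + P + rho *: e0 F.
have d2P : dot a2 P = sg.
  by move: hP1; rewrite in_hypE (dot_b two0 P a10 a20) -/W BWP => /eqP ->; rewrite add0r.
have d3x x : dot a3 x = dot a2 x + Bf (W + P) x.
  by rewrite (dot_b two0 x a20 a30) /a3 (addrA a2 a1 (phi P)) (addrC a2 a1) phiD -/W !BfDl Bf_pp.
have BWR : Bf W R = sg.
  by rewrite /R !BfDr (Bfxx two0) add0r BWP BfZr (BfC W (e0 F)) Bfe0 mulr0 addr0.
have Rn : R != 0 by apply: contra sgn => /eqP R0; rewrite -BWR R0 /Bf !cd0; apply/eqP; ring.
have h2R : in_hyp a2 R.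
  by rewrite in_hypE /R dotDr dotZr dot_e0 a20 mulr1 -/rho (addxx two0).
have h3R : in_hyp a3 R.
  move: h2R; rewrite !in_hypE d3x => /eqP ->; rewrite add0r /R BfDr (Bfxx two0) add0r BfZr.
  by rewrite (BfC _ (e0 F)) Bfe0 mulr0.
have QR : Qpar R = 0.
  have erho : rho = dot a2 W + sg by rewrite /rho dotDr d2P.
  rewrite /R (QD two0) QZ Qe0 BfZr (BfC _ (e0 F)) Bfe0 mulr0 addr0 (QD two0) QP addr0 BWP.
  rewrite erho (dot_split a2) W0 mulr0 add0r.
  move: hsg; rewrite /kappa -/W (dot_split a2) W0 mulr0 add0r => hsg.
  have e : Qpar W + sg + (Bf (phi a2) W + sg) ^+ 2 * 1 = (sg ^+ 2 + sg) + (Qpar W + Bf (phi a2) W ^+ 2) + 2 * (Bf (phi a2) W * sg) by ring.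
  by rewrite e hsg two0 mul0r addr0 addxx.
apply: (proj2 (TC two0 ed2 Rn h2R h3R QR _)) => x h2 h3.
move: h2 h3; rewrite !in_hypE d3x => /eqP ->; rewrite add0r => /eqP h.
by rewrite /R BfDl h add0r BfZl Bfe0 mulr0.
Qed.
End Main.

Lemma sum4 (V : nmodType) (f : 'I_4 -> V) : \sum_i f i = f (inord 0) + f (inord 1) + f (inord 2) + f (inord 3).
Proof.
rewrite !big_ord_recl big_ord0 addr0 !addrA.
by repeat congr (_ + _); congr f; apply/val_inj; rewrite /= inordK.
Qed.

Section Ref.
Variable F : finFieldType.
Hypothesis two0 : (2 : F) = 0.
Implicit Types (x W a b u v R P : 'rV[F]_5) (y z w : 'rV[F]_4) (M : 'M[F]_(4,5)) (c d : F).

Definition rws (d : F) : seq 'rV[F]_5 :=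
  [:: v5 0 1 0 0 0; v5 0 0 1 0 0; v5 1 0 0 1 0; v5 d 0 0 0 1].
Definition Mref (d : F) : 'M[F]_(4,5) := \matrix_(i < 4) nth 0 (rws d) i.

Lemma MrefE d y : y *m Mref d = v5 (cd y 2 + d * cd y 3) (cd y 0) (cd y 1) (cd y 2) (cd y 3).
Proof.
rewrite mulmx_sum_row sum4 !rowK /cd !inordK //= (ord1 0).
apply: eq5; rewrite /cd !mxE !inordK //=; ring.
Qed.

Lemma mk_ell a M c d : a != 0 -> aniso c d -> (forall y, Qpar (y *m M) = gf c d y) ->
  (forall y, in_hyp a (y *m M)) -> ell_data a M c d.
Proof.
move=> an ani hf hin; split=> //; first exact: (rowfree_form two0 ani).
apply/row_matrixP => i; rewrite row_mul row0 rowE; apply/eqP; exact: hin.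
Qed.

Lemma aniso_ref d : ~ inT d -> aniso 1 (d ^+ 2).
Proof.
move=> nd y2 y3 h.
have [y30|y30] := eqVneq y3 0.
  move: h; rewrite y30 !mulr0 expr0n /= mulr0 !addr0 => /eqP; rewrite expf_eq0 /= => /eqP.
  by [].
exfalso; apply: nd.
set w := y2 / y3.
have e : w ^+ 2 + w + d ^+ 2 = 0.
  have -> : w ^+ 2 + w + d ^+ 2 = (y2 ^+ 2 + 1 * y2 * y3 + d ^+ 2 * y3 ^+ 2) / y3 ^+ 2.
    by rewrite /w; field.
  by rewrite h mul0r.
have e2 : d ^+ 2 = w ^+ 2 + w.
  by apply/eqP; rewrite -subr_eq0 (oppr2 two0) addrC e.
have := inT_add two0 (ex_intro _ w e2 : inT (d ^+ 2)) (inT_f d).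
have -> : d ^+ 2 + (d ^+ 2 + d) = d by rewrite addrA (addxx two0) add0r.
by [].
Qed.

Lemma ref_ell d : ~ inT d -> ell_data (v5 1 0 0 1 d) (Mref d) 1 (d ^+ 2).
Proof.
move=> nd; apply: mk_ell; first 2 last.
- by move=> y; rewrite MrefE /Qpar /gf !vcE; ring: two0.
- move=> y; rewrite MrefE in_hypE /dot !vcE; apply/eqP; ring: two0.
- by apply/eqP => /(congr1 (fun t => cd t 0)); rewrite cd0 !vcE => /eqP; rewrite oner_eq0.
- exact: aniso_ref.
Qed.
End Ref.

Section Final.
Variable F : finFieldType.
Hypothesis two0 : (2 : F) = 0.

Lemma diam_up (X Y : {set 'rV[F]_5}) : elliptic_ovoid X -> elliptic_ovoid Y ->
  dist_le (@elliptic_ovoid F) (@tangent F) X Y 2.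
Proof.
case=> a [ea ->]; case=> b [eb ->].
move/ell_dataP: ea => [M [c [d ed]]]; move/ell_dataP: eb => [M' [c' [d' ed']]].
have [ed1 a0 sa] := normalize two0 ed; have [ed2 b0 sb] := normalize two0 ed'.
rewrite -sa -sb.
move: ed1 a0 ed2 b0; set a' := _ *: a; set b' := _ *: b => ed1 a0 ed2 b0.
have [e|ne] := eqVneq a' b'.
  by exists [::]; split => //; rewrite e.
have [a3 [e3 t1 t2]] := common two0 ed1 ed2 a0 b0 ne.
exists [:: section a3; section b']; split => //=.
split=> //; split; first by exists a3.
split=> //; split=> //; exists b'; split=> //; apply/ell_dataP; by exists M', c', d'.
Qed.

Lemma diam_low : (2 < #|F|)%N -> exists X Y, elliptic_ovoid X /\ elliptic_ovoid Y /\
  ~ dist_le (@elliptic_ovoid F) (@tangent F) X Y 1.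
Proof.
move=> hgt.
have [d nd] := notT_ex two0.
have [t [t0 t1]] := big_ex hgt.
set e := t ^+ 2 + t.
have en : e != 0.
  have -> : e = t * (t + 1) by rewrite /e; ring.
  rewrite mulf_eq0 negb_or t0 /=; apply: contra t1 => /eqP h.
  by apply/eqP; rewrite -[t](addr0) -h addrA (addxx two0) add0r.
set u := e ^+ 2.
have un : u != 0 by rewrite expf_eq0 negb_and en orbT.
set a := v5 1 0 0 1 d; set b := v5 1 u 1 1 d.
have ed := ref_ell two0 nd.
have a0 : cd a 0 = 1 by rewrite !vcE.
have b0 : cd b 0 = 1 by rewrite !vcE.
have kb : inT (kappa a b).
  have -> : kappa a b = u + 2 * (2 * d + 2 * (u + 2 * d) ^+ 2).
    by rewrite /kappa /Qpar /dot /phi !cdD !vcE; ring.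
  rewrite two0 mul0r addr0.
  have -> : u = (t ^+ 2) ^+ 2 + t ^+ 2 by rewrite /u /e; ring: two0.
  exact: inT_f.
have [M' ed'] := Tr two0 ed a0 b0 kb.
exists (section a), (section b); split; first by exists a; split=> //; apply/ell_dataP; exists (Mref d), 1, (d ^+ 2).
split; first by exists b; split=> //; apply/ell_dataP; exists M', 1, (d ^+ 2).
case=> p [hp hw]; case: p hp hw => [|Z [|? ?]] //= _.
  move=> hab.
  have : v5 0 1 0 0 0 \in section a.
    rewrite in_section in_hypE /dot /Qpar !vcE.
    apply/and3P; split.
    - by apply/eqP => /(congr1 (fun t => cd t 1)); rewrite cd0 !vcE => /eqP; rewrite oner_eq0.
    - by apply/eqP; ring.
    - by apply/eqP; ring.
  rewrite hab in_section in_hypE /dot !vcE => /and3P [_ h _]; move: h.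
  have -> : 1 * 0 + u * 1 + 1 * 0 + 1 * 0 + d * 0 = u by ring.
  by rewrite (negbTE un).
case=> [[_ [v [vn I]]] [_ eZ]]; rewrite eZ in I.
pose p1 := v5 e 1 u e 0.
pose p2 := v5 d (d / e) (u * d / e) 0 1.
have memI x : x != 0 -> dot a x = 0 -> dot b x = 0 -> Qpar x = 0 -> x \in proj_point v.
  move=> xn da db Qx; rewrite -I inE !in_section !in_hypE da db Qx eqxx xn; by [].
have m1 : p1 \in proj_point v.
  apply: memI.
  - by apply/eqP => /(congr1 (fun t => cd t 1)); rewrite cd0 !vcE => /eqP; rewrite oner_eq0.
  - by rewrite /dot !vcE; ring: two0.
  - by rewrite /dot !vcE; ring: two0.
  - by rewrite /Qpar !vcE /u; ring: two0.
have m2 : p2 \in proj_point v.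
  apply: memI.
  - by apply/eqP => /(congr1 (fun t => cd t 4)); rewrite cd0 !vcE => /eqP; rewrite oner_eq0.
  - by rewrite /dot !vcE; ring: two0.
  - by rewrite /dot !vcE; ring: two0.
  - rewrite /Qpar !vcE /u.
    have -> : d ^+ 2 + d / e * (e ^+ 2 * d / e) + 0 * 1 = d ^+ 2 + d ^+ 2 by field.
    exact: addxx.
case/in_proj: m1 => k1 k1n h1; case/in_proj: m2 => k2 k2n h2.
have : p2 = (k2 / k1) *: p1 by rewrite h1 h2 scalerA divfK.
move/(congr1 (fun t => cd t 4)); rewrite cdZ !vcE mulr0 => /eqP; by rewrite oner_eq0.
Qed.
End Final.


Unset Implicit Arguments. Set Strict Implicit.
Local Close Scope ring_scope.

Theorem mainTheorem3 (F : finFieldType) (n : nat) :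
  #|F| = (2 ^ n)%N -> (2 < 2 ^ n)%N ->
  has_diameter (@elliptic_ovoid F) (@tangent F) 2.
Proof.
move=> hc hgt.
have two0 : ((2 : F) = 0)%R.
  have := @card_finPcharP F 2 n hc (isT : prime 2).
  by move/GRing.pcharf0.
split; first by move=> X Y; exact: (diam_up two0).
by apply: (diam_low two0); rewrite hc.
Qed.
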